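(* Let $(S,\cdot)$ be a discrete semigroup and let $\mathcal{F}$ be a filter on $S$ such that $\overline{\mathcal{F}}=\bigcap_{F\in\mathcal{F}}\overline{F}\subseteq\beta S$ is a (closed) subsemigroup of $\beta S$. Let $B\subseteq S$. Then $B$ is $\mathcal{F}$-central if and only if there exist a dynamical system $(X,\langle T_s\rangle_{s\in S})$, points $x,y\in X$ and a neighbourhood $U$ of $y$ such that $x$ and $y$ are $\mathcal{F}$-proximal, $y$ is $\mathcal{F}$-uniformly recurrent, and $B=\{s\in S: T_s(x)\in U\}$.
   Context: $\beta S$ is the Stone–Čech compactification of the discrete semigroup $S$ (the space of ultrafilters on $S$), with the operation extended so that $(\beta S,\cdot)$ is a compact right topological semigroup; $A\in p\cdot q$ iff $\{x\in S: x^{-1}A\in q\}\in p$, where $x^{-1}A=\{y\in S: xy\in A\}$. For a filter $\mathcal{F}$ on $S$, $\overline{\mathcal{F}}=\bigcap_{F\in\mathcal{F}}\overline{F}$ is the set of ultrafilters containing $\mathcal{F}$. For a compact Hausdorff right topological semigroup $T$, $K(T)$ denotes its smallest two-sided ideal. A set $C\subseteq S$ is $\mathcal{F}$-central if there is an idempotent $p\in K(\overline{\mathcal{F}})$ with $C\in p$. A dynamical system $(X,\langle T_s\rangle_{s\in S})$ consists of a compact (Hausdorff) space $X$ and continuous maps $T_s:X\to X$ with $T_s\circ T_t=T_{st}$ for all $s,t\in S$. A set $A\subseteq S$ is $\mathcal{F}$-syndetic if for every $F\in\mathcal{F}$ there is a finite $G\subseteq F$ with $G^{-1}A=\bigcup_{t\in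 G}t^{-1}A\in\mathcal{F}$. A point $x\in X$ is $\mathcal{F}$-uniformly recurrent if for every neighbourhood $U$ of $x$, $\{s\in S: T_s(x)\in U\}$ is $\mathcal{F}$-syndetic. Points $x,y\in X$ are $\mathcal{F}$-proximal if for every neighbourhood $U$ of the diagonal in $X\times X$ and every $F\in\mathcal{F}$ there is $s\in F$ with $(T_s(x),T_s(y))\in U$. *)

(* Defs.v *)
From HB Require Import structures.
From mathcomp Require Import all_boot all_order.
From mathcomp Require Import all_classical all_reals topology.
Set Implicit Arguments. Unset Strict Implicit. Unset Printing Implicit Defensive.
Local Open Scope classical_set_scope.

Section Defs.
Variables (S : Type) (op : S -> S -> S).

Definition is_filter (F : set (set S)) : Prop :=
  [/\ F setT, ~ F set0,
      (forall A B, F A -> F B -> F (A `&` B)) &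
      (forall A B, A `<=` B -> F A -> F B)].

Definition is_ultrafilter (p : set (set S)) : Prop :=
  is_filter p /\ (forall A, p A \/ p (~` A)).

Definition linv (x : S) (A : set S) : set S := [set y | A (op x y)].

(** The extended operation on beta S: A in p.q iff {x | x^{-1}A in q} in p. *)
Definition uprod (p q : set (set S)) : set (set S) :=
  [set A | p [set x | q (linv x A)]].

(** closure of F : the ultrafilters containing the filter F *)
Definition Fbar (F : set (set S)) (p : set (set S)) : Prop :=
  is_ultrafilter p /\ F `<=` p.

Definition Fbar_subsemigroup (F : set (set S)) : Prop :=
  forall p q, Fbar F p -> Fbar F q -> Fbar F (uprod p q).

Definition Fbar_ideal (F : set (set S)) (I : set (set (set S))) : Prop :=
  [/\ I `<=` Fbar F, I !=set0,
      (forall p q, Fbar F p -> I q -> I (uprod p q)) &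
      (forall p q, I p -> Fbar F q -> I (uprod p q))].

Definition in_K_Fbar (F : set (set S)) (p : set (set S)) : Prop :=
  forall I, Fbar_ideal F I -> I p.

Definition F_central (F : set (set S)) (C : set S) : Prop :=
  exists p, [/\ Fbar F p, in_K_Fbar F p, uprod p p = p & p C].

Definition setlinv (G A : set S) : set S := [set y | exists2 t, G t & A (op t y)].

Definition F_syndetic (F : set (set S)) (A : set S) : Prop :=
  forall E, F E -> exists G : set S, [/\ finite_set G, G `<=` E & F (setlinv G A)].

Definition dynamical_system (X : topologicalType) (T : S -> X -> X) : Prop :=
  [/\ compact [set: X], hausdorff_space X,
      (forall s, continuous (T s)) &
      (forall s t, T s \o T t = T (op s t))].

Definition F_uniformly_recurrent (F : set (set S)) (X : topologicalType)
    (T : S -> X -> X) (x : X) : Prop :=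
  forall U, nbhs x U -> F_syndetic F [set s | U (T s x)].

Definition diag_nbhs (X : topologicalType) (U : set (X * X)) : Prop :=
  exists V : set (X * X), [/\ open V, (forall z : X, V (z, z)) & V `<=` U].

Definition F_proximal (F : set (set S)) (X : topologicalType)
    (T : S -> X -> X) (x y : X) : Prop :=
  forall U E, diag_nbhs U -> F E -> exists2 s, E s & U (T s x, T s y).

End Defs.

(* Main.v *)
Require Import Defs.
From HB Require Import structures.
From mathcomp Require Import all_boot all_order.
From mathcomp Require Import all_classical all_reals topology.
Local Open Scope classical_set_scope.

Set Implicit Arguments. Unset Strict Implicit. Unset Printing Implicit Defensive.


Section Semi.
Variables (S : Type) (op : S -> S -> S) (op_assoc : associative op).
Implicit Types (G H p q r : set (set S)) (A B E Z : set S).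

Definition uf (p : set (set S)) := is_ultrafilter p.
Definition Ubar (G : set (set S)) (p : set (set S)) := uf p /\ G `<=` p.
Definition Dq (q : set (set S)) (A : set S) := [set t | q (linv op t A)].
Definition mulF (G : set (set S)) (p : set (set S)) := [set A | G (Dq p A)].

Lemma fT G : is_filter G -> G setT. Proof. by case. Qed.
Lemma f0 G : is_filter G -> ~ G set0. Proof. by case. Qed.
Lemma fI G A B : is_filter G -> G A -> G B -> G (A `&` B).
Proof. by case=> _ _ h _; apply: h. Qed.
Lemma fS G A B : is_filter G -> A `<=` B -> G A -> G B.
Proof. by case=> _ _ _ h; apply: h. Qed.
Lemma fN0 G A : is_filter G -> G A -> A !=set0.
Proof.
move=> hG GA; apply/set0P/negP => /eqP A0; rewrite A0 in GA.
exact: (f0 hG GA).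
Qed.
Lemma fI0 G A B : is_filter G -> G A -> G B -> A `&` B !=set0.
Proof. move=> hG GA GB; exact: (fN0 hG (fI hG GA GB)). Qed.

Lemma ufF p : uf p -> is_filter p. Proof. by case. Qed.
Lemma ufC p A : uf p -> p (~` A) <-> ~ p A.
Proof.
move=> [hp hu]; split.
  move=> pnA pA; have := fI hp pA pnA; rewrite setICr; exact: f0 hp.
by case: (hu A).
Qed.

Lemma ultra_sub_eq p q : uf p -> uf q -> p `<=` q -> p = q.
Proof.
move=> hp hq pq; apply/seteqP; split => // A qA.
apply: contrapT => npA; move/(ufC A hp): npA => /pq qnA.
by move/(ufC A hq): qnA.
Qed.

Lemma linv_assoc x y A : linv op y (linv op x A) = linv op (op x y) A.
Proof. by apply/seteqP; split => w; rewrite /linv /= op_assoc. Qed.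

Lemma uprod_assoc p q r : uprod op p (uprod op q r) = uprod op (uprod op p q) r.
Proof.
rewrite /uprod /=; apply/seteqP; split => A /=;
  congr (p _); apply/seteqP; split => x /=; congr (q _);
  apply/seteqP; split => y /=; by rewrite linv_assoc.
Qed.

Lemma Dq_mono q A B : is_filter q -> A `<=` B -> Dq q A `<=` Dq q B.
Proof. by move=> hq AB t /=; apply: fS hq _; move=> w /=; apply: AB. Qed.

Lemma Dq_I q A B : is_filter q -> Dq q A `&` Dq q B `<=` Dq q (A `&` B).
Proof. by move=> hq t [/= h1 h2]; exact: (fI hq h1 h2). Qed.

Lemma Dq_T q : is_filter q -> Dq q setT = setT.
Proof.
move=> hq; apply/seteqP; split => // t _ /=; apply: fS hq _ (fT hq).
by move=> w.
Qed.

Lemma Dq_0 q : is_filter q -> Dq q set0 = set0.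
Proof.
move=> hq; apply/seteqP; split => // t /= h.
by apply: (f0 hq); apply: (fS hq _ h) => w.
Qed.

Lemma Dq_C q A : uf q -> Dq q (~` A) = ~` Dq q A.
Proof.
move=> hq.
have E t : linv op t (~` A) = ~` linv op t A by apply/seteqP; split.
by apply/seteqP; split => t; rewrite /Dq /= E => /(ufC _ hq).
Qed.

Lemma mulF_filter G p : is_filter G -> uf p -> is_filter (mulF G p).
Proof.
move=> hG hp; have hp' := ufF hp; split; rewrite /mulF /=.
- by rewrite Dq_T //; exact: fT.
- by rewrite Dq_0 //; exact: f0.
- by move=> A B hA hB; apply: (fS hG (Dq_I hp')); exact: fI.
- by move=> A B AB; apply: fS hG _; exact: Dq_mono.
Qed.

Lemma uprod_uf p q : uf p -> uf q -> uf (uprod op p q).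
Proof.
move=> hp hq; split; last first.
  move=> A; rewrite /uprod /=.
  case: (proj2 hp (Dq q A)) => h; [by left|right].
  by rewrite -/(Dq q _) Dq_C.
exact: (mulF_filter (ufF hp) hq).
Qed.

Lemma UL G : is_filter G -> exists p, uf p /\ G `<=` p.
Proof.
move=> hG.
have PF : ProperFilter G.
  constructor; first exact: f0 hG.
  constructor; [exact: fT hG| move=> A B; exact: fI hG | move=> A B; exact: fS hG].
have [p [Up Gp]] := ultraFilterLemma PF.
exists p; split => //; split; last by move=> A; exact: in_ultra_setVsetC.
split; [exact: filterT | exact: filter_not_empty | move=> A B; exact: filterI|
  move=> A B; exact: filterS].
Qed.

Lemma TF G1 G2 : is_filter G1 -> G2 setT ->
  (forall A B, G2 A -> G2 B -> G2 (A `&` B)) ->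
  (forall A B, G1 A -> G2 B -> A `&` B !=set0) ->
  exists p, [/\ uf p, G1 `<=` p & G2 `<=` p].
Proof.
move=> h1 h2T h2I hx.
pose H := [set Z | exists A B, [/\ G1 A, G2 B & A `&` B `<=` Z]].
have hH : is_filter H.
  split.
  - by exists setT, setT; split => //; exact: fT.
  - move=> [A [B [h1A h2B sub]]]; have [w wAB] := hx _ _ h1A h2B.
    exact: sub _ wAB.
  - move=> Z Z' [A [B [hA hB s]]] [A' [B' [hA' hB' s']]].
    exists (A `&` A'), (B `&` B'); split; [exact: fI|exact: h2I|].
    by move=> w [[? ?] [? ?]]; split; [apply: s|apply: s'].
  - move=> Z Z' ZZ' [A [B [hA hB s]]]; exists A, B; split => //.
    by move=> w /s; apply: ZZ'.
have [p [Up Hp]] := UL hH.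
exists p; split => // Z hZ; apply: Hp.
  by exists Z, setT; split; [exact: hZ|exact: h2T| move=> w []].
by exists setT, Z; split; [exact: fT|exact: hZ| move=> w []].
Qed.

Lemma sat G A : is_filter G -> ~ G A -> exists p, [/\ uf p, G `<=` p & ~ p A].
Proof.
move=> hG nGA.
have [|||p [Up h1 h2]] := @TF G [set Z | ~` A `<=` Z] hG.
- by [].
- by move=> Z Z' h h' w nA; split; [apply: h|apply: h'].
- move=> E Z hE hZ; apply/set0P/negP => /eqP h0; apply: nGA.
  apply: fS hG _ hE => w Ew; apply: contrapT => nAw.
  have : (E `&` Z) w by split => //; apply: hZ.
  by rewrite h0.
exists p; split => //; apply/(ufC _ Up); exact: h2.
Qed.

Lemma sat' G A : is_filter G -> (forall p, Ubar G p -> p A) -> G A.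
Proof.
move=> hG h; apply: contrapT => nGA; have [p [Up Gp npA]] := sat hG nGA.
by apply: npA; apply: h.
Qed.

Lemma image_lemma G p r : is_filter G -> uf p -> uf r ->
  (forall A, G (Dq p A) -> r A) ->
  exists q, [/\ uf q, G `<=` q & uprod op q p = r].
Proof.
move=> hG hp hr h.
have hp' := ufF hp; have hr' := ufF hr.
have [|||q [Uq Gq Dq_q]] := @TF G [set Z | exists A, r A /\ Dq p A `<=` Z] hG.
- by exists setT; split; [exact: fT|].
- move=> Z Z' [A [rA sA]] [A' [rA' sA']]; exists (A `&` A'); split.
    exact: fI.
  move=> t /= ht; split; [apply: sA; apply: (Dq_mono hp' _ ht)|
    apply: sA'; apply: (Dq_mono hp' _ ht)]; by move=> w [].
- move=> E Z hE [A [rA sA]]; apply/set0P/negP => /eqP h0.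
  have : r (~` A).
    apply: h; apply: fS hG _ hE => t Et; rewrite Dq_C //= => DA.
    have : (E `&` Z) t by split => //; apply: sA.
    by rewrite h0.
  by move/(ufC _ hr).
exists q; split => //; apply/esym/ultra_sub_eq => //; first exact: uprod_uf.
move=> A rA; rewrite /uprod /=; apply: Dq_q; exists A; split => //.
Qed.

Lemma Ubar_mulF G p r : is_filter G -> uf p ->
  Ubar (mulF G p) r <-> exists q, Ubar G q /\ uprod op q p = r.
Proof.
move=> hG hp; split.
  move=> [Ur hr]; have [q [Uq Gq <-]] := image_lemma hG hp Ur hr.
  by exists q.
move=> [q [[Uq Gq] <-]]; split; first exact: uprod_uf.
by move=> A hA; apply: Gq.
Qed.

End Semi.


Section Semi2.
Variables (S : Type) (op : S -> S -> S) (op_assoc : associative op).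
Implicit Types (G H p q r : set (set S)) (A B E Z : set S).

Lemma zorn_filt (P : set (set (set S))) H0 :
  P H0 -> H0 setT ->
  (forall C, C `<=` P -> C !=set0 -> total_on C subset ->
     P (\bigcup_(X in C) X)) ->
  exists H, [/\ P H, H0 `<=` H & forall H', P H' -> H `<=` H' -> H' `<=` H].
Proof.
move=> PH0 H0T hch.
pose P2 := fun H : set (set S) => H = set0 \/ (P H /\ H0 `<=` H).
have [|A [PA Amax]] := @Zorn_bigcup _ P2.
  move=> C CP Ctot.
  have [[X [CX [PX HX]]]|nX] := pselect (exists X, C X /\ P X /\ H0 `<=` X).
    right.
    pose C' := C `&` [set X | P X /\ H0 `<=` X].
    have eq : \bigcup_(X in C) X = \bigcup_(X in C') X.
      apply/seteqP; split => Z [Y CY YZ]; last by exists Y => //; case: CY.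
      have [Y0|[PY HY]] := CP _ CY; first by rewrite Y0 in YZ.
      by exists Y.
    rewrite eq; split.
      apply: hch; [by move=> Y [_ []]| by exists X| ].
      by move=> s t [Cs _] [Ct _]; apply: Ctot.
    by move=> Z /HX HZ; exists X.
  left; apply/seteqP; split => // Z [Y CY YZ].
  have [Y0|hY] := CP _ CY; first by rewrite Y0 in YZ.
  by exfalso; apply: nX; exists Y.
have [A0|[PA' HA]] := PA.
  exfalso; apply: (Amax H0); last by right; split.
  rewrite A0; split; first by move=> ? [].
  by move=> h; have := h _ H0T.
exists A; split => // H' PH' AH'.
apply: contrapT => nH'A; apply: (Amax H') => //.
right; split => //; exact: subset_trans AH'.
Qed.

Lemma chain_filter (C : set (set (set S))) : C `<=` @is_filter S -> C !=set0 ->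
  total_on C subset -> is_filter (\bigcup_(X in C) X).
Proof.
move=> CF [X0 CX0] tot; split.
- by exists X0 => //; apply: fT; apply: CF.
- by move=> [X CX X0']; exact: (f0 (CF _ CX) X0').
- move=> A B [X CX XA] [Y CY YB].
  have [XY|YX] := tot _ _ CX CY.
    by exists Y => //; apply: fI (CF _ CY) (XY _ XA) YB.
  by exists X => //; apply: fI (CF _ CX) XA (YX _ YB).
- by move=> A B AB [X CX XA]; exists X => //; apply: fS (CF _ CX) AB XA.
Qed.

Lemma Ubar_sub G H p : G `<=` H -> Ubar H p -> Ubar G p.
Proof. by move=> GH [Up Hp]; split => // A /GH /Hp. Qed.

Lemma Ubar_bigcup (C : set (set (set S))) X p :
  C X -> Ubar (\bigcup_(Y in C) Y) p -> Ubar X p.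
Proof. by move=> CX; apply: Ubar_sub => A XA; exists X. Qed.

Definition semiclosed H := forall p q, Ubar H p -> Ubar H q -> Ubar H (uprod op p q).

Lemma ellis H : is_filter H -> semiclosed H ->
  exists e, Ubar H e /\ uprod op e e = e.
Proof.
move=> hH scH.
pose P := fun H' => is_filter H' /\ semiclosed H'.
have [|||Hs [[hHs scHs] HHs Hmax]] := @zorn_filt P H.
- by [].
- exact: fT.
- move=> C CP Cne tot; split.
    by apply: chain_filter => // X /CP [].
  move=> p q hp hq; split; first by apply: (uprod_uf op); [case: hp|case: hq].
  move=> A [X CX XA].
  have := (proj2 (CP _ CX)) p q (Ubar_bigcup CX hp) (Ubar_bigcup CX hq).
  by case=> _; apply.
have [p [Up Hsp]] := UL hHs.
have hH1 := mulF_filter op hHs Up.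
have HsH1 : Hs `<=` mulF op Hs p.
  move=> A HsA; apply: (@sat' _ Hs) => // q Uq.
  have := scHs q p Uq (conj Up Hsp); case=> _; apply; exact: HsA.
have scH1 : semiclosed (mulF op Hs p).
  move=> r r' /(Ubar_mulF op _ hHs Up) [q [Uq <-]] /(Ubar_mulF op _ hHs Up) [q' [Uq' <-]].
  apply/(Ubar_mulF op _ hHs Up).
  exists (uprod op (uprod op q p) q'); split.
    by apply: (scHs); [apply: (scHs) => //; exact: (conj Up Hsp) | exact: Uq'].
  by rewrite !(uprod_assoc op_assoc).
have H1Hs := Hmax _ (conj hH1 scH1) HsH1.
have [q0 [Uq0 q0p]] : exists q, Ubar Hs q /\ uprod op q p = p.
  by apply/(Ubar_mulF op _ hHs Up); split => // A /H1Hs /Hsp.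
pose H2 := [set A | forall q, Ubar Hs q -> uprod op q p = p -> q A].
have hH2 : is_filter H2.
  split.
  - by move=> q [Uq _] _; apply: fT (ufF Uq).
  - by move=> h; apply: (f0 (ufF (proj1 Uq0))); apply: h.
  - by move=> A B hA hB q Uq e; apply: fI (ufF (proj1 Uq)) (hA q Uq e) (hB q Uq e).
  - by move=> A B AB hA q Uq e; apply: fS (ufF (proj1 Uq)) AB (hA q Uq e).
have HsH2 : Hs `<=` H2 by move=> A HsA q [_ Hq] _; apply: Hq.
have H2fix r : Ubar H2 r -> uprod op r p = p.
  move=> [Ur H2r]; apply/esym/ultra_sub_eq => //; first exact: (uprod_uf op).
  move=> A pA; apply: H2r => q Uq e.
  by move: pA; rewrite -{1}e.
have scH2 : semiclosed H2.
  move=> r r' hr hr'; have Ur := Ubar_sub HsH2 hr; have Ur' := Ubar_sub HsH2 hr'.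
  split; first by apply: (uprod_uf op); [case: hr|case: hr'].
  move=> A H2A; apply: H2A; first exact: scHs.
  by rewrite -(uprod_assoc op_assoc) (H2fix _ hr') (H2fix _ hr).
have H2Hs := Hmax _ (conj hH2 scH2) HsH2.
exists p; split; first by split => // A /HHs /Hsp.
by apply: H2fix; split => // A /H2Hs /Hsp.
Qed.

End Semi2.


Section Semi3.
Variables (S : Type) (op : S -> S -> S) (op_assoc : associative op).
Implicit Types (G H p q r : set (set S)) (A B E Z : set S).
Variables (F : set (set S)) (hF : is_filter F) (Hsub : Fbar_subsemigroup op F).

Definition lideal H := forall q r, Ubar F q -> Ubar H r -> Ubar H (uprod op q r).

Lemma Fsub_mulF l : Ubar F l -> F `<=` mulF op F l.
Proof.
move=> Ul A FA; apply: (@sat' _ F) => // q Uq.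
by have [_] := Hsub Uq Ul; apply.
Qed.

Lemma lideal_mulF l : uf l -> lideal (mulF op F l).
Proof.
move=> Ul q r Uq /(Ubar_mulF op _ hF Ul) [c [Uc <-]].
apply/(Ubar_mulF op _ hF Ul); exists (uprod op q c); split.
  exact: Hsub.
by rewrite (uprod_assoc op_assoc).
Qed.

Lemma min_left l0 : Ubar F l0 ->
  exists H, [/\ is_filter H, F `<=` H,
    (forall r, Ubar H r -> exists c, Ubar F c /\ uprod op c l0 = r),
    lideal H &
    (forall l r, Ubar H l -> Ubar H r -> exists c, Ubar F c /\ uprod op c l = r)].
Proof.
move=> Ul0.
pose P := fun H => is_filter H /\ lideal H.
have [|||Hs [[hHs liHs] H0Hs Hmax]] := @zorn_filt _ P (mulF op F l0).
- by split; [exact: mulF_filter (proj1 Ul0)|exact: lideal_mulF (proj1 Ul0)].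
- by apply: fT; exact: mulF_filter (proj1 Ul0).
- move=> C CP Cne tot; split.
    by apply: chain_filter => // X /CP [].
  move=> q r Uq hr; split; first by apply: (uprod_uf op); [case: Uq|case: hr].
  move=> A [X CX XA].
  have := (proj2 (CP _ CX)) q r Uq (Ubar_bigcup CX hr).
  by case=> _; apply.
exists Hs; split => //.
- exact: subset_trans (Fsub_mulF Ul0) H0Hs.
- move=> r hr; apply/(Ubar_mulF op _ hF (proj1 Ul0)).
  exact: Ubar_sub H0Hs hr.
- move=> l r hl hr.
  have Ul : Ubar F l := Ubar_sub (subset_trans (Fsub_mulF Ul0) H0Hs) hl.
  have HsFl : Hs `<=` mulF op F l.
    move=> A HsA; apply: (@sat' _ F) => // q Uq.
    by have [_] := liHs q l Uq hl; apply.
  have FlHs := Hmax _ (conj (mulF_filter op hF (proj1 Ul)) (lideal_mulF (proj1 Ul))) HsFl.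
  apply/(Ubar_mulF op _ hF (proj1 Ul)).
  exact: Ubar_sub FlHs hr.
Qed.

Lemma in_K_of_min H u :
  is_filter H -> F `<=` H -> lideal H ->
  (forall l r, Ubar H l -> Ubar H r -> exists c, Ubar F c /\ uprod op c l = r) ->
  Ubar H u -> in_K_Fbar op F u.
Proof.
move=> hH FH liH minH Hu I [IF [i Ii] Ileft Iright].
have Ui : Ubar F i := IF _ Ii.
have [l [Ul Hl]] := UL hH.
have Hl' : Ubar H l by [].
have Iil : I (uprod op i l) by apply: Iright => //; exact: Ubar_sub FH Hl'.
have Hil : Ubar H (uprod op i l) by apply: liH.
have [c [Uc <-]] := minH _ _ Hil Hu.
exact: Ileft.
Qed.

Lemma K_forward p : Ubar F p -> in_K_Fbar op F p -> uprod op p p = p ->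
  forall r, Ubar F r -> exists c, Ubar F c /\ uprod op (uprod op c r) p = p.
Proof.
move=> Up Kp pp r Ur.
have [H [hH FH _ liH minH]] := min_left Up.
pose I := [set z | exists l b, [/\ Ubar H l, Ubar F b & z = uprod op l b]].
have [] : Fbar_ideal op F I.
  split.
  - move=> z [l [b [Hl Ub ->]]]; apply: Hsub => //; exact: Ubar_sub FH Hl.
  - have [l [Ul Hl]] := UL hH; exists (uprod op l p), l, p; split => //.
  - move=> a z Ua [l [b [Hl Ub ->]]]; exists (uprod op a l), b; split => //.
      exact: liH.
    by rewrite (uprod_assoc op_assoc).
  - move=> z b' [l [b [Hl Ub ->]]] Ub'; exists l, (uprod op b b'); split => //.
      exact: Hsub.
    by rewrite (uprod_assoc op_assoc).
move=> IF I0 Il Ir.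
have [l [b [Hl Ub pE]]] := Kp I (And4 IF I0 Il Ir).
pose l1 := uprod op p l.
have Hl1 : Ubar H l1 by apply: liH.
have pE1 : p = uprod op l1 b by rewrite /l1 -(uprod_assoc op_assoc) -pE pp.
have Hrl1 : Ubar H (uprod op r l1) by apply: liH.
have [c [Uc cE]] := minH _ _ Hrl1 Hl1.
exists c; split => //.
transitivity (uprod op (uprod op (uprod op c r) l1) b).
  by rewrite -(uprod_assoc op_assoc (uprod op c r) l1 b) -pE1.
by rewrite -(uprod_assoc op_assoc c r l1) cE -pE1.
Qed.

Lemma finite_union_uf q (Gs : set S) A : finite_set Gs -> uf q ->
  q (setlinv op Gs A) -> exists2 t, Gs t & q (linv op t A).
Proof.
move=> /(@finite_seqP {classic S}) [s ->] Uq.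
elim: s => [|a s IH] /=.
  move=> h; exfalso; apply: (f0 (ufF Uq)); apply: (fS (ufF Uq) _ h).
  by move=> y [t].
move=> h.
have [ha|na] := pselect (q (linv op a A)).
  by exists a => //=; rewrite inE eqxx.
have h2 : q (setlinv op [set` s] A).
  apply: (fS (ufF Uq) _ (fI (ufF Uq) h (proj2 (ufC _ Uq) na))).
  move=> y [[t ts Aty] nAay].
  move: ts; rewrite /= inE => /orP [/eqP tE|ts].
    by exfalso; apply: nAay; rewrite /linv /= -tE.
  by exists t.
have [t ts qt] := IH h2; exists t => //.
by rewrite inE; apply/orP; right.
Qed.

Lemma syndetic_lemma A q : F_syndetic op F A -> Ubar F q ->
  exists r, Ubar F r /\ uprod op r q A.
Proof.
move=> synd [Uq Fq].
have [|||r [Ur Fr Dr]] := @TF _ F [set Z | Dq op q A `<=` Z] hF.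
- by [].
- by move=> Z Z' h h' t ht; split; [apply: h|apply: h'].
- move=> E Z FE DZ.
  have [Gs [fGs GE FG]] := synd E FE.
  have [t Gt qt] := finite_union_uf fGs Uq (Fq _ FG).
  by exists t; split; [apply: GE|apply: DZ].
exists r; split => //; apply: Dr => t //.
Qed.

End Semi3.


Section Dyn.
Variables (S : Type) (op : S -> S -> S).
Variables (X : topologicalType) (T : S -> X -> X) (hds : dynamical_system op T).
Implicit Types (G H p q r : set (set S)) (A B E Z : set S).

Definition lim_spec q (z c : X) := forall W, nbhs c W -> q [set s | W (T s z)].

Lemma lim_ex q z : uf q -> exists c, lim_spec q z c.
Proof.
case: hds => cpt _ _ _ Uq; have hq := ufF Uq.
pose G := [set W : set X | q [set s | W (T s z)]].
have PF : ProperFilter G.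
  constructor.
    rewrite /G /=; move=> h; apply: (f0 hq); apply: (fS hq _ h); by move=> s.
  constructor.
  - by rewrite /G /=; apply: (fS hq _ (fT hq)).
  - by move=> A B hA hB; rewrite /G /=; apply: (fS hq _ (fI hq hA hB)) => s.
  - by move=> A B AB hA; rewrite /G /=; apply: (fS hq _ hA) => s /AB.
have [c [_ clc]] := cpt G PF (fS hq (fun s _ => I) (fT hq)).
exists c => W hW; apply: contrapT => nW.
have GnW : G (~` W) by rewrite /G; apply/(ufC _ Uq).
have [w [nWw Ww]] := clc _ _ GnW hW.
exact: nWw.
Qed.

Lemma lim_uniq q z c d : uf q -> lim_spec q z c -> lim_spec q z d -> c = d.
Proof.
case: hds => _ hsd _ _ Uq hc hd; apply: hsd => A B hA hB.
have [s [As Bs]] := fI0 (ufF Uq) (hc _ hA) (hd _ hB).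
by exists (T s z).
Qed.

Lemma lim_comp p q z c d : uf p -> uf q ->
  lim_spec q z c -> lim_spec p c d -> lim_spec (uprod op p q) z d.
Proof.
case: hds => _ _ cont comp Up Uq hc hd W hW.
rewrite nbhsE in hW; case: hW => B [oB Bd] BW.
have hB : nbhs d B by apply: open_nbhs_nbhs.
apply: (fS (ufF Up) _ (hd _ hB)) => t /= Btc.
have nB : nbhs (T t c) B by apply: open_nbhs_nbhs.
have := cont t c B nB => /hc h.
apply: (fS (ufF Uq) _ h) => s /= Bs.
apply: BW; move: Bs; rewrite /linv /=.
by rewrite -comp.
Qed.

End Dyn.


Section Rev.
Variables (S : Type) (op : S -> S -> S) (op_assoc : associative op).
Variables (F : set (set S)) (hF : is_filter F) (Hsub : Fbar_subsemigroup op F).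
Variables (X : topologicalType) (T : S -> X -> X) (hds : dynamical_system op T).
Implicit Types (G H p q r : set (set S)) (A B E Z : set S).

Lemma prox_step (x y : X) : F_proximal F T x y ->
  exists p c, [/\ Ubar F p, lim_spec T p x c & lim_spec T p y c].
Proof.
move=> prox.
have [|||p [Up Fp Gp]] := @TF _ F
   [set Z | exists V, diag_nbhs V /\ [set s | V (T s x, T s y)] `<=` Z] hF.
- exists setT; split => //; exists setT; split => //; exact: openT.
- move=> Z Z' [V [[V0 [oV0 dV0 V0V]] VZ]] [V' [[V0' [oV0' dV0' V0V']] VZ']].
  exists (V `&` V'); split.
    exists (V0 `&` V0'); split; [exact: openI|by move=> w; split|].
    by move=> w [/V0V ? /V0V' ?].
  by move=> s [? ?]; split; [apply: VZ|apply: VZ'].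
- move=> E Z FE [V [dV VZ]]; have [s Es Vs] := prox V E dV FE.
  by exists s; split => //; apply: VZ.
have [a ha] := lim_ex hds x Up; have [b hb] := lim_ex hds y Up.
exists p, a; split => //.
suff -> : a = b by [].
case: (hds) => cpt hsd _ _.
apply: contrapT => /eqP ab.
have := hsd; rewrite open_hausdorff => /(_ a b ab) [[A1 B1] [/= aA1 bB1]] [oA1 oB1 /eqP AB0].
have [A' hA' clA'] := compact_regular hsd cpt (@filterT _ (nbhs a) _) (open_nbhs_nbhs (conj oA1 (set_mem aA1))).
have [B' hB' clB'] := compact_regular hsd cpt (@filterT _ (nbhs b) _) (open_nbhs_nbhs (conj oB1 (set_mem bB1))).
pose V := [set z : X * X | ~ closure A' z.1 \/ ~ closure B' z.2].
have dV : diag_nbhs V.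
  exists V; split => //.
  - rewrite openE => z [nz|nz].
      exists (~` closure A', setT) => /=.
        split; last exact: filterT.
        apply: open_nbhs_nbhs; split => //; rewrite openC; exact: closed_closure.
      by move=> w [/= ? _]; left.
    exists (setT, ~` closure B') => /=.
      split; first exact: filterT.
      apply: open_nbhs_nbhs; split => //; rewrite openC; exact: closed_closure.
    by move=> w [/= _ ?]; right.
  - move=> w; apply: contrapT => /not_orP [/contrapT wA /contrapT wB].
    have : (A1 `&` B1) w by split; [apply: clA'|apply: clB'].
    by rewrite AB0.
have pV : p [set s | V (T s x, T s y)].
  by apply: Gp; exists V; split.
have [s [[Vs As] Bs]] := fI0 (ufF Up) (fI (ufF Up) pV (ha _ hA')) (hb _ hB').
case: Vs => /=; apply.
  exact: subset_closure.
exact: subset_closure.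
Qed.


Lemma reverse (x y : X) (U : set X) : nbhs y U -> F_proximal F T x y ->
  F_uniformly_recurrent op F T y -> F_central op F [set s | U (T s x)].
Proof.
move=> hU prox urec.
have [p [c [Up hpx hpy]]] := prox_step prox.
have [Hs [hHs FHs elems liH minH]] := min_left op_assoc hF Hsub Up.
have [|||v [Uv Hv Gv]] := @TF _ Hs
   [set Z | exists W, nbhs y W /\ [set s | W (T s y)] `<=` Z] hHs.
- by exists setT; split => //; exact: filterT.
- move=> Z Z' [W [hW WZ]] [W' [hW' WZ']]; exists (W `&` W'); split.
    exact: filterI.
  by move=> s [? ?]; split; [apply: WZ|apply: WZ'].
- move=> E Z HE [W [hW WZ]].
  have [l [Ul Hl]] := UL hHs.
  have hl : Ubar Hs l by [].
  have [r [Ur rA]] := syndetic_lemma hF (urec W hW) (Ubar_sub FHs hl).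
  have Hrl := liH r l Ur hl.
  have [s [Es As]] := fI0 (ufF (proj1 Hrl)) (proj2 Hrl _ HE) rA.
  by exists s; split => //; apply: WZ.
have vy : lim_spec T v y y.
  by move=> W hW; apply: Gv; exists W; split.
pose H3 := [set A | forall r, Ubar Hs r -> lim_spec T r y y -> r A].
have hH3 : is_filter H3.
  split.
  - by move=> r [Ur _] _; apply: fT (ufF Ur).
  - by move=> h; apply: (f0 (ufF Uv)); apply: h.
  - by move=> A B hA hB r hr e; apply: fI (ufF (proj1 hr)) (hA r hr e) (hB r hr e).
  - by move=> A B AB hA r hr e; apply: fS (ufF (proj1 hr)) AB (hA r hr e).
have HsH3 : Hs `<=` H3 by move=> A HsA r [_ Hr] _; apply: Hr.
have H3fix r : Ubar H3 r -> Ubar Hs r /\ lim_spec T r y y.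
  move=> hr; split; first exact: Ubar_sub HsH3 hr.
  by move=> W hW; apply: (proj2 hr) => r' _; apply.
have scH3 : semiclosed op H3.
  move=> r r' /H3fix [hr ry] /H3fix [hr' ry'].
  split; first by apply: (uprod_uf op); [case: hr|case: hr'].
  move=> A H3A; apply: H3A.
    by apply: liH => //; exact: Ubar_sub FHs hr.
  move=> W hW; exact: (lim_comp hds (proj1 hr) (proj1 hr') ry' ry hW).
have [u [hu uu]] := ellis op_assoc hH3 scH3.
have [Hu uy] := H3fix _ hu.
have [w [Uw wE]] := elems _ Hu.
have [d hd] := lim_ex hds c (proj1 Uw).
have h1 := lim_comp hds (proj1 Uw) (proj1 Up) hpx hd.
have h2 := lim_comp hds (proj1 Uw) (proj1 Up) hpy hd.
rewrite wE in h1 h2.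
have dy := lim_uniq hds (proj1 hu) h2 uy.
rewrite dy in h1.
exists u; split => //.
- exact: Ubar_sub FHs Hu.
- exact: in_K_of_min hHs FHs liH minH Hu.
- exact: h1 _ hU.
Qed.

End Rev.


Lemma cont_prod (I : Type) (Y : topologicalType) (K : I -> topologicalType)
  (f : Y -> prod_topology K) :
  (forall i, continuous (fun y => f y i)) -> continuous f.
Proof.
move=> hc y; apply/cvg_sup => i U /=.
move=> [? /= [[W oW <-]]] /= Wsfz /filterS; apply; apply: (hc i).
exact: open_nbhs_nbhs.
Qed.

Section Fwd.
Variables (S : Type) (op : S -> S -> S) (op_assoc : associative op).
Variables (F : set (set S)) (hF : is_filter F) (Hsub : Fbar_subsemigroup op F).
Implicit Types (G H p q r : set (set S)) (A B E Z : set S).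

Definition Ix := {classic (option S)}.
Definition Xs := prod_topology (fun _ : Ix => bool).
Definition mulo (u : Ix) (s : S) : Ix :=
  match u with None => Some s | Some t => Some (op t s) end.
Definition Tm (s : S) (f : Xs) : Xs := fun u => f (mulo u s).

Lemma coord_nbhs (g : Xs) (i : Ix) : nbhs g [set f : Xs | f i = g i].
Proof.
have := @proj_continuous Ix (fun _ => bool) i g [set g i].
apply.
by rewrite nbhs_principalE; apply/principal_filterP.
Qed.

Lemma ds_fwd : dynamical_system op Tm.
Proof.
split.
- have := @tychonoff Ix (fun _ => bool) (fun _ => setT) (fun=> bool_compact).
  by congr (compact _); rewrite eqEsubset.
- by apply: hausdorff_product => ?; apply: discrete_hausdorff.
- move=> s; apply: cont_prod => u.
  exact: (@proj_continuous Ix (fun _ => bool) (mulo u s)).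
- move=> s t; apply: funext => f; apply: funext => u.
  by case: u => [w|] //=; rewrite /Tm /= op_assoc.
Qed.


Lemma forward B : F_central op F B ->
  exists (X : topologicalType) (T : S -> X -> X) (x y : X) (U : set X),
    [/\ dynamical_system op T, nbhs y U,
        F_proximal F T x y, F_uniformly_recurrent op F T y
      & B = [set s | U (T s x)]].
Proof.
move=> [p [Up Kp pp pB]].
have ds := ds_fwd.
pose x : Xs := fun u : Ix => match u with None => true | Some s => `[< B s >] end.
have [y hy] := lim_ex ds x (proj1 Up).
have yy : lim_spec Tm p y y.
  have [y' hy'] := lim_ex ds y (proj1 Up).
  have hy2 : lim_spec Tm (uprod op p p) x y'.
    by move=> W hW; exact: (lim_comp ds (proj1 Up) (proj1 Up) hy hy' hW).
  rewrite pp in hy2.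
  by have e := lim_uniq ds (proj1 Up) hy hy2; rewrite {2}e.
have yN : y None = true.
  have := hy _ (coord_nbhs y None).
  move=> h; have [s [Bs /= e]] := fI0 (ufF (proj1 Up)) pB h.
  by rewrite -e /= /mulo; apply/asboolP.
exists Xs, Tm, x, y, [set f : Xs | f None = true]; split => //.
- by have := coord_nbhs y None; rewrite yN.
- move=> V E [V0 [oV0 dV0 V0V]] FE.
  have hV0 : nbhs (y, y) V0 by apply: open_nbhs_nbhs; split.
  case: hV0 => [[Q R]] [/= hQ hR] QR.
  have [s [[Es Qs] Rs]] := fI0 (ufF (proj1 Up))
     (fI (ufF (proj1 Up)) (proj2 Up _ FE) (hy _ hQ)) (yy _ hR).
  by exists s => //; apply: V0V; apply: QR.
- move=> W hW E FE; apply: contrapT => nG.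
  pose A := [set s | W (Tm s y)].
  have [|||r [Ur Fr Gr]] := @TF _ F
     [set Z | exists G : set S, [/\ finite_set G, G `<=` E & ~` setlinv op G A `<=` Z]] hF.
  + exists set0; split => //; exact: finite_set0.
  + move=> Z Z' [G [fG GE GZ]] [G' [fG' GE' GZ']].
    exists (G `|` G'); split.
    * by rewrite finite_setU.
    * by move=> t [/GE|/GE'].
    * move=> w nw; split.
        by apply: GZ => -[t Gt At]; apply: nw; exists t => //; left.
      by apply: GZ' => -[t Gt At]; apply: nw; exists t => //; right.
  + move=> E' Z FE' [G [fG GE GZ]]; apply: contrapT => ne.
    apply: nG; exists G; split => //.
    apply: (fS hF _ FE') => w E'w; apply: contrapT => nw.
    by apply: ne; exists w; split => //; apply: GZ.
  have rnot t : E t -> ~ r (linv op t A).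
    move=> Et rt.
    have : r (~` setlinv op [set t] A).
      apply: Gr; exists [set t]; split; [exact: finite_set1| by move=> w ->| by []].
    move/(ufC _ Ur); apply; apply: (fS (ufF Ur) _ rt) => w Aw.
    by exists t.
  have [c [Uc cE]] := K_forward op_assoc hF Hsub Up Kp pp (conj Ur Fr).
  have Ucr := uprod_uf op (proj1 Uc) Ur.
  have [d hd] := lim_ex ds y Ucr.
  have hd2 : lim_spec Tm (uprod op (uprod op c r) p) y d.
    by move=> W' hW'; exact: (lim_comp ds Ucr (proj1 Up) yy hd hW').
  rewrite cE in hd2.
  have dy := lim_uniq ds (proj1 Up) hd2 yy; rewrite dy in hd.
  have [t [Et rt]] := fI0 (ufF (proj1 Uc)) (proj2 Uc _ FE) (hd _ hW).
  exact: rnot Et rt.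
- apply/seteqP; split => s /=.
    by move=> Bs; apply/asboolP.
  by move/asboolP.
Qed.

End Fwd.


Theorem theorem5 (S : Type) (op : S -> S -> S) (op_assoc : associative op)
  (F : set (set S)) (HF : is_filter F) (Hsub : Fbar_subsemigroup op F)
  (B : set S) :
  F_central op F B <->
  exists (X : topologicalType) (T : S -> X -> X) (x y : X) (U : set X),
    [/\ dynamical_system op T, nbhs y U,
        F_proximal F T x y, F_uniformly_recurrent op F T y
      & B = [set s | U (T s x)]].
Proof.
split; first exact: (forward op_assoc HF Hsub).
move=> [X [T [x [y [U [ds hU prox urec ->]]]]]].
exact: (reverse op_assoc HF Hsub ds hU prox urec).
Qed.
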